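(* Let $d\geq 1$ and let $\mathcal{W}_d=\{(\lambda_1,\dots,\lambda_d)\in\mathbb{Z}^d : \lambda_1>\dots>\lambda_d\}$, viewed as a graph in which two vertices are adjacent iff they are at Euclidean distance $1$, with rank $r(\lambda)=\sum_{i=1}^d\lambda_i-\binom{d+1}{2}$. Let $\mu,\lambda\in\mathcal{W}_d$ with $r(\mu)\leq r(\lambda)$, and let $W_0,W_1,W_2,\dots$ be any sequence of words in the two letters $L,R$ such that $W_n$ contains exactly $n$ letters $L$ and exactly $n+r(\lambda)-r(\mu)$ letters $R$. Then $$\sum_{n\geq 0} Z_d(W_n;\mu,\lambda)\frac{x^{2n+r(\lambda)-r(\mu)}}{n!\,(n+r(\lambda)-r(\mu))!}=\det\big(I_{\lambda_i-\mu_j}(2x)\big)_{1\leq i,j\leq d}.$$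
   Context: For a word $W=L^{b_k}R^{a_k}\cdots L^{b_1}R^{a_1}$, $Z_d(W;\mu,\lambda)$ is the number of walks in the graph $\mathcal{W}_d$ from $\mu$ to $\lambda$ that consist of $a_1$ rank-increasing steps, then $b_1$ rank-decreasing steps, then $a_2$ rank-increasing steps, then $b_2$ rank-decreasing steps, and so on, ending with $b_k$ rank-decreasing steps (a step goes between adjacent vertices and changes the rank by $+1$ or $-1$). $I_k$ denotes the modified Bessel function of integer order $k$: for $k\geq 0$, $I_k(2x)=\sum_{n\geq 0}\frac{x^{2n+k}}{n!\,(n+k)!}$, and $I_{-k}=I_k$. *)

(* Defs.v *)
From HB Require Import structures.
From mathcomp Require Import all_boot all_order all_algebra.
From mathcomp Require Import all_classical all_reals all_analysis.
Set Implicit Arguments. Unset Strict Implicit. Unset Printing Implicit Defensive.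
Import Order.TTheory GRing.Theory Num.Theory numFieldNormedType.Exports.
Local Open Scope ring_scope.

(* Vertices of W_d are functions 'I_d -> int (lambda_1 = lam 0, ...). *)
Definition inW (d : nat) (lam : 'I_d -> int) : bool :=
  [forall i : 'I_d, forall j : 'I_d, (i < j)%N ==> (lam j < lam i)].

Definition rank (d : nat) (lam : 'I_d -> int) : int :=
  \sum_(i < d) lam i - ('C(d.+1, 2))%:Z.

Inductive letter := L | R.
Definition isL (c : letter) : bool := if c is L then true else false.
Definition isR (c : letter) : bool := if c is R then true else false.

(* a step along letter c in coordinate i: R = +e_i (rank-increasing),
   L = -e_i (rank-decreasing).  The neighbours of v in Z^d at Euclidean
   distance 1 are exactly the v +- e_i. *)
Definition step (d : nat) (c : letter) (i : 'I_d) (v : 'I_d -> int) : 'I_d -> int :=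
  fun j => if j == i then (if c is R then v j + 1 else v j - 1) else v j.

Fixpoint nwalks (d : nat) (s : seq letter) (v w : 'I_d -> int) : nat :=
  match s with
  | [::] => if [forall i, v i == w i] then 1%N else 0%N
  | c :: s' => (\sum_(i < d)
                  (if inW (step c i v) then nwalks s' (step c i v) w else 0%N))%N
  end.

(* Z_d(W; mu, lambda): W = L^{b_k} R^{a_k} ... L^{b_1} R^{a_1} is given as the
   list of its letters written left to right; the walk performs the letters
   from right to left (first R^{a_1}). *)
Definition Z (d : nat) (W : seq letter) (mu lam : 'I_d -> int) : nat :=
  nwalks (rev W) mu lam.

Definition besselI (Rt : realType) (k : int) (y : Rt) : Rt :=
  limn (series (fun n : nat =>
    (y / 2) ^+ (2 * n + `|k|)%N / ((n`! * (n + `|k|)`!)%N)%:R)).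

(* Main.v *)
Require Import Defs.
From HB Require Import structures.
From mathcomp Require Import all_boot all_order all_algebra.
From mathcomp Require Import all_classical all_reals all_analysis.
From mathcomp Require Import all_fingroup.
From mathcomp Require Import zify ring lra.
Set Implicit Arguments. Unset Strict Implicit. Unset Printing Implicit Defensive.
Import Order.TTheory GRing.Theory Num.Theory numFieldNormedType.Exports.
Local Open Scope ring_scope.

Fixpoint fwalks (d : nat) (s : seq letter) (v w : 'I_d -> int) : nat :=
  match s with
  | [::] => if [forall i, v i == w i] then 1%N else 0%N
  | c :: s' => (\sum_(i < d) fwalks s' (step c i v) w)%N
  end.

Definition permv d (s : 'S_d) (v : 'I_d -> int) : 'I_d -> int := fun j => v (s j).

Lemma step_perm d c i (s : 'S_d) v : step c i (permv s v) = permv s (step c (s i) v).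
Proof.
apply: funext => j; rewrite /step /permv (inj_eq perm_inj) //.
Qed.

Lemma permvM d (s t : 'S_d) v : permv s (permv t v) = permv (s * t) v.
Proof. by apply: funext => j; rewrite /permv permM. Qed.

Section DS.
Variable R : numDomainType.

Definition Ds d s (v w : 'I_d -> int) : R :=
  \sum_(p : 'S_d) (-1) ^+ p * (fwalks s (permv p v) w)%:R.

Lemma Ds_cons d c s (v w : 'I_d -> int) :
  Ds (c :: s) v w = \sum_(i < d) Ds s (step c i v) w.
Proof.
rewrite /Ds [RHS]exchange_big /=; apply: eq_bigr => p _.
rewrite natr_sum mulr_sumr.
rewrite (eq_bigr (fun i => (-1)^+p * (fwalks s (permv p (step c (p i) v)) w)%:R)); last first.
  by move=> i _; rewrite (step_perm c i p v).
by rewrite [RHS](reindex_inj (@perm_inj _ p)).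
Qed.

Lemma Ds_perm d s (t : 'S_d) (v w : 'I_d -> int) :
  Ds s (permv t v) w = (-1) ^+ t * Ds s v w.
Proof.
rewrite /Ds mulr_sumr (reindex_inj (mulIg (t^-1)%g)) /=.
apply: eq_bigr => p _; rewrite permvM -mulgA mulVg mulg1.
by rewrite odd_permM odd_permV mulrA -signr_addb addbC.
Qed.

Lemma Ds_eq0 d s (v w : 'I_d -> int) (a b : 'I_d) :
  a != b -> v a = v b -> Ds s v w = 0.
Proof.
move=> ab vab.
have E : permv (tperm a b) v = v.
  apply: funext => j; rewrite /permv permE /=.
  by case: ifP => [/eqP->//|]; case: ifP => // /eqP->.
have := Ds_perm s (tperm a b) v w; rewrite E odd_tperm ab expr1 mulN1r.
move/eqP; rewrite -subr_eq0 opprK -mulr2n mulrn_eq0 /= => /eqP //.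
Qed.
End DS.

Lemma incr_ge n (f : 'I_n -> 'I_n) :
  (forall i j : 'I_n, (i < j)%N -> (f i < f j)%N) -> forall i : 'I_n, (i <= f i)%N.
Proof.
move=> fi.
suff H : forall k (i : 'I_n), nat_of_ord i = k -> (k <= f i)%N by move=> i; exact: H.
elim=> [//|k IH] i ik.
have kn : (k < n)%N by rewrite -ik ltnW.
have := IH (Ordinal kn) erefl; have := fi (Ordinal kn) i; rewrite ik /= ltnSn => /(_ isT).
lia.
Qed.

Lemma incr_id n (f : 'I_n -> 'I_n) : injective f ->
  (forall i j : 'I_n, (i < j)%N -> (f i < f j)%N) -> forall i : 'I_n, f i = i.
Proof.
move=> finj fi.
have ge := incr_ge fi.
have S0 : \sum_(i < n) (((f i)%:R : int) - (i%:R)) = 0.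
  by rewrite sumrB [X in _ - X](reindex_inj finj) /= subrr.
have /psumr_eq0P H : forall i : 'I_n, true -> 0 <= ((f i)%:R : int) - i%:R.
  by move=> i _; rewrite subr_ge0 ler_nat ge.
move=> i; apply/val_inj/eqP; rewrite -(eqr_nat int) -subr_eq0; apply/eqP.
exact: H.
Qed.

Lemma inW_lt d (v : 'I_d -> int) (i j : 'I_d) : inW v -> (i < j)%N -> v j < v i.
Proof. by move=> /forallP /(_ i) /forallP /(_ j) /implyP; apply. Qed.

Lemma inW_inj d (v : 'I_d -> int) : inW v -> injective v.
Proof.
move=> vW i j vij; case: (ltngtP i j) => ij; last exact: val_inj.
  by have := inW_lt vW ij; rewrite vij ltxx.
by have := inW_lt vW ij; rewrite vij ltxx.
Qed.

Lemma perm_W_id d (p : 'S_d) (v w : 'I_d -> int) : inW v -> inW w ->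
  (forall i, v (p i) = w i) -> p = 1%g.
Proof.
move=> vW wW E; apply/permP => i; rewrite perm1.
apply: incr_id i; first exact: perm_inj.
move=> i j ij; have := inW_lt wW ij; rewrite -!E.
case: (ltngtP (p i) (p j)) => // pij.
  by move=> H; have := inW_lt vW pij; rewrite ltNge (ltW H).
by move/val_inj/perm_inj: pij => pij; rewrite pij ltxx.
Qed.

Lemma step_notW d c i (v : 'I_d -> int) : inW v -> ~~ inW (step c i v) ->
  exists a b, a != b /\ step c i v a = step c i v b.
Proof.
move=> vW /forallPn [a /forallPn [b]]; rewrite negb_imply -leNgt => /andP [ab le].
exists a, b; split; first by rewrite neq_ltn ab.
have := inW_lt vW ab; move: le; rewrite /step.
have ab' : a != b by rewrite neq_ltn ab.
case: c => /=; case: (eqVneq a i) => ai; case: (eqVneq b i) => bi; subst;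
  try (by move: ab; rewrite ltnn); lia.
Qed.

Section NW.
Variable R : numDomainType.

Lemma nwalks_Ds d s (v w : 'I_d -> int) : inW v -> inW w ->
  (nwalks s v w)%:R = Ds R s v w.
Proof.
elim: s v => [|c s IH] v vW wW.
- rewrite /Ds (bigD1 1%g) //= big1 ?addr0.
    rewrite odd_perm1 expr0 mul1r; congr (_%:R); congr (if _ then _ else _).
    by apply: eq_forallb => i; rewrite /permv perm1.
  move=> p p1; case: ifP; rewrite ?mulr0 //.
  move/forallP => E; exfalso; move/eqP: p1; apply.
  by apply: (perm_W_id vW wW) => i; apply/eqP/E.
- rewrite Ds_cons /= natr_sum; apply: eq_bigr => i _.
  case: ifP => [sW|sW]; first exact: IH.
  have [a [b [ab E]]] := step_notW vW (negbT sW).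
  by rewrite (Ds_eq0 _ _ _ ab E).
Qed.
End NW.

Section Deriv.
Variable R : comNzRingType.
Lemma deriv_prod_seq (I : eqType) (r : seq I) (F : I -> {poly R}) : uniq r ->
 (\prod_(i <- r) F i)^`() = \sum_(i <- r) (F i)^`() * \prod_(j <- r | j != i) F j.
Proof.
elim: r => [|a r IH] /=; first by rewrite !big_nil -polyC1 derivC.
move/andP=> [anr ur]; rewrite !big_cons derivM IH // eqxx /=.
congr (_ + _).
  congr (_ * _); rewrite big_seq_cond [RHS]big_seq_cond; apply: eq_bigl => j.
  by case: (eqVneq j a) => [->|]; rewrite ?(negbTE anr) ?andbT.
rewrite mulr_sumr [LHS]big_seq [RHS]big_seq; apply: eq_bigr => i ir.
rewrite big_cons.
have -> : (a != i) by apply: contraNneq anr => ->.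
by rewrite mulrCA.
Qed.

Lemma deriv_prod (I : finType) (F : I -> {poly R}) :
 (\prod_i F i)^`() = \sum_i (F i)^`() * \prod_(j | j != i) F j.
Proof. exact: deriv_prod_seq (index_enum_uniq I). Qed.

Lemma coefM_agree (p p' q : {poly R}) n :
  (forall j, (j <= n)%N -> p`_j = p'`_j) -> (p * q)`_n = (p' * q)`_n.
Proof.
move=> E; rewrite !coefM; apply: eq_bigr => j _; rewrite E //.
by rewrite -ltnS.
Qed.
End Deriv.

Section Formula.
Variable Rf : numFieldType.
Variable x : Rf.

Definition H (t : int) (b : nat) : Rf :=
  match t with Posz u => x ^+ (u + b) / ((u`! * b`!)%N)%:R | Negz _ => 0 end.

Lemma fact_neq0 n : (n`!%:R : Rf) != 0.
Proof. by rewrite pnatr_eq0 -lt0n fact_gt0. Qed.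

Lemma H_R t b : x * H (t - 1) b = t%:~R * H t b.
Proof.
case: t => [[|u]|u] /=.
- by rewrite mul0r mulr0.
- rewrite subn1 /= factS !natrM addSn exprS.
  have := fact_neq0 u; have := fact_neq0 b => h1 h2.
  rewrite -[(u.+1)%:~R]/((u.+1)%:R : Rf).
  by field; rewrite h1 h2 addrC natr1 pnatr_eq0.
- by rewrite !mulr0.
Qed.

Lemma H_L t b : x * H t b = (b.+1)%:R * H t b.+1.
Proof.
case: t => [u|u] /=; last by rewrite !mulr0.
rewrite factS !natrM addnS exprS.
have := fact_neq0 u; have := fact_neq0 b => h1 h2.
by field; rewrite h1 h2 addrC natr1 pnatr_eq0.
Qed.

Definition Q (K : nat) (m : int) : {poly Rf} := \poly_(b < K) H (m + b%:Z) b.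

Lemma Q_R K m : x *: Q K (m - 1) = m%:~R *: Q K m + 'X * (Q K m)^`().
Proof.
apply/polyP => b; rewrite coefZ coefD coefZ coefXM coef_deriv !coef_poly.
case: b => [|b] /=.
  by rewrite !addr0; case: ifP => _; rewrite ?mulr0 // H_R.
have -> : m - 1 + (b.+1)%:Z = (m + (b.+1)%:Z) - 1 by rewrite addrAC.
case: ifP => bK; last by rewrite !mulr0 add0r mul0rn.
by rewrite H_R intrD mulrDl mulr_natl.
Qed.

Lemma Q_L K m b : (b.+1 < K)%N -> (x *: Q K (m + 1))`_b = ((Q K m)^`())`_b.
Proof.
move=> bK; rewrite coefZ coef_deriv !coef_poly bK (ltnW bK).
have -> : m + 1 + b%:Z = m + (b.+1)%:Z by rewrite -addrA; congr (_ + _); lia.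
by rewrite H_L mulr_natl.
Qed.


Lemma stepR_d d (i j : 'I_d) (v w : 'I_d -> int) :
  w j - step R i v j = if j == i then (w j - v j) - 1 else w j - v j.
Proof. by rewrite /step; case: ifP => // _; lia. Qed.

Lemma stepL_d d (i j : 'I_d) (v w : 'I_d -> int) :
  w j - step L i v j = if j == i then (w j - v j) + 1 else w j - v j.
Proof. by rewrite /step; case: ifP => // _; lia. Qed.

Lemma sum_ind d (i : 'I_d) (f : 'I_d -> int) (e : int) :
  \sum_j (if j == i then f j + e else f j) = \sum_j f j + e.
Proof.
rewrite (bigD1 i) //= eqxx [in RHS](bigD1 i) //= -addrA [e + _]addrC addrA.
congr (_ + _ + _); apply: eq_bigr => j /negbTE ->; done.
Qed.

Lemma prod_split d K (i : 'I_d) (f : 'I_d -> int) (e : int) :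
  \prod_j Q K (if j == i then f j + e else f j) =
  Q K (f i + e) * \prod_(j | j != i) Q K (f j).
Proof.
rewrite (bigD1 i) //= eqxx; congr (_ * _); apply: eq_bigr => j /negbTE ->; done.
Qed.

Lemma fw_formula d K s (v w : 'I_d -> int) :
  (count isL s < K)%N ->
  \sum_i (w i - v i) = (count isR s)%:Z - (count isL s)%:Z ->
  (fwalks s v w)%:R * x ^+ (count isR s + count isL s)
     / (((count isR s)`! * (count isL s)`!)%N)%:R
  = (\prod_i Q K (w i - v i))`_(count isL s).
Proof.
elim: s v => [|c s IH] v /= Kq Hs.
- rewrite coef0_prod expr0 mulr1 divr1.
  under eq_bigr do rewrite coef_poly Kq addr0.
  case: ifP => [/forallP E|/negbT /forallPn [i vi]].
    rewrite big1 // => i _; move/eqP: (E i) => ->.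
    by rewrite subrr /= addn0 expr0 divr1.
  case: (boolP [exists j, w j - v j < 0]) => [/existsP [j jl]|/existsPn jn].
    rewrite (bigD1 j) //=; move: jl; case: (w j - v j) => // u _.
    by rewrite mul0r.
  have Hs0 : \sum_j (w j - v j) = 0 by rewrite Hs subrr.
  have Z0 : forall j : 'I_d, true -> 0 <= w j - v j.
    by move=> j _; have := jn j; rewrite -leNgt.
  have := @psumr_eq0P _ _ _ _ Z0 Hs0 i isT; move/eqP; rewrite subr_eq0 eq_sym.
  by rewrite (negbTE vi).
- case: c Kq Hs => /= Kq Hs; rewrite ?add0n ?add1n in Kq Hs *;
  set p := count isR s; set q := count isL s.
  +
    have IHi : forall i, (fwalks s (step L i v) w)%:R * x ^+ (p + q) / ((p`! * q`!)%N)%:R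
        = (\prod_j Q K (w j - step L i v j))`_q.
      move=> i; apply: IH; first exact: ltnW.
      under eq_bigr do rewrite stepL_d.
      by rewrite sum_ind Hs; lia.
    have S : \sum_i x * (\prod_j Q K (w j - step L i v j))`_q =
             (\prod_i Q K (w i - v i))`_q.+1 *+ q.+1.
      rewrite -coef_deriv deriv_prod coef_sum; apply: eq_bigr => i _.
      under eq_bigr do rewrite stepL_d.
      rewrite prod_split -coefZ scalerAl.
      apply: coefM_agree => j jq; apply: Q_L; lia.
    have F1 : forall i, (fwalks s (step L i v) w)%:R * x ^+ (p + q.+1)
                / ((p`! * q.+1`!)%N)%:R =
        ((fwalks s (step L i v) w)%:R * x ^+ (p + q) / ((p`! * q`!)%N)%:R) * x / q.+1%:R.
      move=> i; rewrite factS !natrM addnS exprS.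
      have := fact_neq0 p; have := fact_neq0 q => h1 h2.
      by field; rewrite h1 h2 addrC natr1 pnatr_eq0.
    rewrite natr_sum !mulr_suml.
    rewrite (eq_bigr _ (fun i _ => F1 i)); under eq_bigr do rewrite IHi.
    rewrite -mulr_suml (eq_bigr (fun i => x * (\prod_j Q K (w j - step L i v j))`_q)); last first.
      by move=> i _; rewrite mulrC.
    by rewrite S -[X in X / _]mulr_natr mulfK // pnatr_eq0.
  +
    have IHi : forall i, (fwalks s (step R i v) w)%:R * x ^+ (p + q) / ((p`! * q`!)%N)%:R
        = (\prod_j Q K (w j - step R i v j))`_q.
      move=> i; apply: IH => //.
      under eq_bigr do rewrite stepR_d.
      by rewrite sum_ind Hs; lia.
    have S : \sum_i x * (\prod_j Q K (w j - step R i v j))`_q =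
             (\prod_i Q K (w i - v i))`_q *+ p.+1.
      transitivity ((\sum_i (x *: Q K (w i - v i - 1)) *
                      \prod_(j | j != i) Q K (w j - v j))`_q).
        rewrite coef_sum; apply: eq_bigr => i _.
        under eq_bigr do rewrite stepR_d.
        by rewrite prod_split -coefZ -scalerAl.
      rewrite (eq_bigr (fun i => (w i - v i)%:~R *: (Q K (w i - v i) * \prod_(j | j != i) Q K (w j - v j))
          + 'X * ((Q K (w i - v i))^`() * \prod_(j | j != i) Q K (w j - v j)))); last first.
        by move=> i _; rewrite Q_R mulrDl -scalerAl -mulrA.
      rewrite big_split /= -mulr_sumr -deriv_prod.
      rewrite (eq_bigr (fun i => (w i - v i)%:~R *: \prod_j Q K (w j - v j))); last first.
        by move=> i _; rewrite [in RHS](bigD1 i).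
      rewrite -scaler_suml coefD coefZ coefXM coef_deriv.
      have E : forall n (c : {poly Rf}), (if n == 0%N then 0 else c`_n.-1.+1 *+ n.-1.+1) = c`_n *+ n.
        by move=> [|n] c.
      rewrite E -(rmorph_sum intr) Hs /p /q.
      by ring.
    have F1 : forall i, (fwalks s (step R i v) w)%:R * x ^+ (p.+1 + q)
                / ((p.+1`! * q`!)%N)%:R =
        ((fwalks s (step R i v) w)%:R * x ^+ (p + q) / ((p`! * q`!)%N)%:R) * x / p.+1%:R.
      move=> i; rewrite factS !natrM addSn exprS.
      have := fact_neq0 p; have := fact_neq0 q => h1 h2.
      by field; rewrite h1 h2 addrC natr1 pnatr_eq0.
    rewrite natr_sum !mulr_suml.
    rewrite (eq_bigr _ (fun i _ => F1 i)); under eq_bigr do rewrite IHi.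
    rewrite -mulr_suml (eq_bigr (fun i => x * (\prod_j Q K (w j - step R i v j))`_q)); last first.
      by move=> i _; rewrite mulrC.
    by rewrite S -[X in X / _]mulr_natr mulfK // pnatr_eq0.
Qed.

End Formula.

Local Open Scope classical_set_scope.

Section Coef.
Variable R : realType.

Lemma coefM_le (p1 p2 q1 q2 : {poly R}) :
  (forall j, `|p1`_j| <= q1`_j) -> (forall j, `|p2`_j| <= q2`_j) ->
  forall j, `|(p1 * p2)`_j| <= (q1 * q2)`_j.
Proof.
move=> h1 h2 n; rewrite !coefM; apply: (le_trans (ler_norm_sum _ _ _)).
apply: ler_sum => j _; rewrite normrM; apply: ler_pM => //.
Qed.

Lemma coef_prod_le d (p q : 'I_d -> {poly R}) :
  (forall i j, `|(p i)`_j| <= (q i)`_j) ->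
  forall n, `|(\prod_i p i)`_n| <= (\prod_i q i)`_n.
Proof.
move=> h; apply: (big_rec2 (fun a b : {poly R} => forall n, `|a`_n| <= b`_n)).
  by move=> n; rewrite coef1; case: (n == 0)%N; rewrite ?normr1 ?normr0.
by move=> i y1 y2 _ hy; apply: coefM_le.
Qed.

Lemma coefM_agree2 (p1 p2 q1 q2 : {poly R}) n :
  (forall j, (j <= n)%N -> p1`_j = q1`_j) -> (forall j, (j <= n)%N -> p2`_j = q2`_j) ->
  forall j, (j <= n)%N -> (p1 * p2)`_j = (q1 * q2)`_j.
Proof.
move=> h1 h2 j jn; rewrite !coefM; apply: eq_bigr => k _.
have kj : (k <= j)%N by rewrite -ltnS.
rewrite h1 ?h2 //; lia.
Qed.

Lemma coef_prod_agree d (p q : 'I_d -> {poly R}) n :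
  (forall i j, (j <= n)%N -> (p i)`_j = (q i)`_j) ->
  forall j, (j <= n)%N -> (\prod_i p i)`_j = (\prod_i q i)`_j.
Proof.
move=> h; apply: (big_rec2 (fun a b : {poly R} => forall j, (j <= n)%N -> a`_j = b`_j)).
  by [].
by move=> i y1 y2 _ hy; exact: (coefM_agree2 (h i) hy).
Qed.

Definition Pt d (g : 'I_d -> nat -> R) (N : nat) : {poly R} := \prod_i \poly_(b < N) g i b.
Definition cc d (g : 'I_d -> nat -> R) (n : nat) : R := (Pt g n.+1)`_n.

Lemma cc_agree d (g : 'I_d -> nat -> R) n N : (n < N)%N -> cc g n = (Pt g N)`_n.
Proof.
move=> nN; apply: (coef_prod_agree (n:=n)) => // i j jn; rewrite !coef_poly.
by rewrite ltnS jn (leq_ltn_trans jn nN).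
Qed.

Lemma Pt_horner d (g : 'I_d -> nat -> R) N B : (size (Pt g N) <= B)%N ->
  \prod_i series (g i) N = \sum_(n < B) (Pt g N)`_n.
Proof.
move=> sB; transitivity ((Pt g N).[1]).
  rewrite /Pt horner_prod; apply: eq_bigr => i _.
  rewrite (horner_coef_wide _ (size_poly _ _)).
  rewrite /series /= big_mkord; apply: eq_bigr => b _.
  by rewrite coef_poly ltn_ord expr1n mulr1.
rewrite (horner_coef_wide 1 sB); apply: eq_bigr => n _.
by rewrite expr1n mulr1.
Qed.


Lemma sum_nat_split (f : nat -> R) N B : (N <= B)%N ->
  \sum_(0 <= n < B) f n = \sum_(0 <= n < N) f n + \sum_(N <= n < B) f n.
Proof. by move=> NB; rewrite (@big_cat_nat _ _ _ N 0 B) //. Qed.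

Lemma cauchy_prod d (g : 'I_d -> nat -> R) :
  (forall i, cvgn (series (fun n => `|g i n|))) ->
  series (cc g) @ \oo --> \prod_i limn (series (g i)).
Proof.
move=> ag.
pose ga := fun i n => `|g i n|.
pose C := cc ga.
have Pa_ge0 : forall N n, 0 <= (Pt ga N)`_n.
  move=> N n; apply: le_trans (normr_ge0 _) (coef_prod_le
     (p := fun i => \poly_(b < N) ga i b) (q := fun i => \poly_(b < N) ga i b) _ n) => i j.
  by rewrite coef_poly; case: ifP => _; rewrite ?normr0 // /ga normr_id.
have C_ge0 : forall n, 0 <= C n := fun n => Pa_ge0 _ _.
have sizeB : forall N, exists B, [/\ (N <= B)%N, (size (Pt g N) <= B)%N &
    (size (Pt ga N) <= B)%N].
  by move=> N; exists (N + size (Pt g N) + size (Pt ga N))%N; split; lia.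
have serC : forall N, series C N = \sum_(0 <= n < N) (Pt ga N)`_n.
  move=> N; rewrite /series /=; apply: eq_big_nat => n /andP [_ nN].
  exact: cc_agree.
have serg : forall N, series (cc g) N = \sum_(0 <= n < N) (Pt g N)`_n.
  move=> N; rewrite /series /=; apply: eq_big_nat => n /andP [_ nN].
  exact: cc_agree.
have gcvg : forall i, cvgn (series (g i)) by move=> i; apply: normed_cvg; exact: ag.
have ga_le : forall i N, series (ga i) N <= limn (series (ga i)).
  move=> i N; apply: nondecreasing_cvgn_le; last exact: ag.
  by apply: nondecreasing_series => n _ _; rewrite /ga normr_ge0.
have Cbound : forall N, series C N <= \prod_i limn (series (ga i)).
  move=> N; have [B [NB _ sa]] := sizeB N.
  rewrite serC; apply: (le_trans (y := \sum_(0 <= n < B) (Pt ga N)`_n)).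
    by rewrite (sum_nat_split _ NB) lerDl sumr_ge0.
  rewrite big_mkord -(Pt_horner sa); apply: ler_prod => i _.
  by rewrite sumr_ge0 ?ga_le // => n _; rewrite /ga normr_ge0.
have Ccvg : cvgn (series C).
  apply: nondecreasing_is_cvgn; first by apply: nondecreasing_series => n _ _.
  by exists (\prod_i limn (series (ga i))) => _ [N _ <-].
pose LC := limn (series C).
have CLC : forall N, series C N <= LC.
  move=> N; apply: nondecreasing_cvgn_le => //.
  by apply: nondecreasing_series => n _ _.
have err : forall N, `|\prod_i series (g i) N - series (cc g) N| <= LC - series C N.
  move=> N; have [B [NB sg sa]] := sizeB N.
  rewrite (Pt_horner sg) -(big_mkord xpredT (fun n => (Pt g N)`_n)) (sum_nat_split _ NB) serg addrC addKr.
  apply: (le_trans (ler_norm_sum _ _ _)).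
  apply: (le_trans (y := \sum_(N <= n < B) C n)).
    apply: ler_sum_nat => n /andP [Nn _].
    apply: (le_trans (coef_prod_le (q := fun i => \poly_(b < N) ga i b) _ n)).
      move=> i j; rewrite !coef_poly; case: ifP => _; rewrite ?normr0 //.
    apply: le_trans (ler_norm _) _.
    apply: (coef_prod_le (p := fun i => \poly_(b < N) ga i b)) => i j.
    rewrite !coef_poly; case: ifP => jN; last by rewrite normr0; case: ifP => _; rewrite /ga ?normr_ge0.
    by rewrite (ltn_trans jN) // /ga normr_id.
  rewrite lerBrDl; apply: le_trans (CLC B).
  by rewrite /series /= (sum_nat_split _ NB).
have box : (fun N => \prod_i series (g i) N) @ \oo --> \prod_i limn (series (g i)).
  apply: (@cvg_big R 'I_d *%R 1 (fun _ => true) (@mul_continuous R) nat \oo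
     (index_enum _) (fun i N => series (g i) N) (fun i => limn (series (g i)))).
  by move=> i _; exact: gcvg.
have tail : (fun N => LC - series C N) @ \oo --> 0.
  by rewrite -(subrr LC); apply: cvgB => //; exact: cvg_cst.
have e0 : (fun N => \prod_i series (g i) N - series (cc g) N) @ \oo --> 0.
  apply: (squeeze_cvgr (f := fun N => - (LC - series C N)) (h := fun N => LC - series C N)).
  - by near=> N; rewrite -ler_norml err.
  - by rewrite -oppr0; apply: cvgN.
  - exact: tail.
have -> : series (cc g) = (fun N => \prod_i series (g i) N -
       (\prod_i series (g i) N - series (cc g) N)).
  by apply: funext => N; rewrite subKr.
by rewrite -[X in _ --> X]subr0; apply: cvgB.
Unshelve. all: by end_near.
Qed.

End Coef.

Section Bessel.
Variable R : realType.
Variable x : R.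

Lemma exp_coeff_le (y : R) u : 0 <= y -> exp_coeff y u <= limn (series (exp_coeff y)).
Proof.
move=> y0; apply: (le_trans (y := series (exp_coeff y) u.+1)).
  rewrite /series /= big_nat_recr //= lerDr sumr_ge0 // => k _.
  exact: exp_coeff_ge0.
apply: nondecreasing_cvgn_le; last exact: is_cvg_series_exp_coeff.
by apply: nondecreasing_series => n _ _; exact: exp_coeff_ge0.
Qed.

Lemma H_abs_cvg (m : int) : cvgn (series (fun b => `|H x (m + b%:Z) b|)).
Proof.
pose E := limn (series (exp_coeff `|x|)).
apply: (series_le_cvg (v_ := fun b => E * exp_coeff `|x| b)).
- by move=> b.
- move=> b; rewrite mulr_ge0 ?exp_coeff_ge0 //.
  exact: le_trans (exp_coeff_ge0 0 _) (exp_coeff_le 0 _).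
- move=> b; case: (m + b%:Z) => [u|u] /=; last first.
    by rewrite normr0 mulr_ge0 ?exp_coeff_ge0 // (le_trans (exp_coeff_ge0 0 _) (exp_coeff_le 0 _)).
  rewrite normrM normfV normrX normr_nat natrM invfM exprD.
  rewrite mulrACA; apply: ler_pM.
  + by rewrite mulr_ge0 ?exprn_ge0 ?invr_ge0.
  + by rewrite mulr_ge0 ?exprn_ge0 ?invr_ge0.
  + exact: exp_coeff_le.
  + by [].
- by apply: is_cvg_seriesZ; exact: is_cvg_series_exp_coeff.
Qed.


Lemma H_cvg (m : int) : series (fun b => H x (m + b%:Z) b) @ \oo --> besselI m (2 * x).
Proof.
have cv : cvgn (series (fun b => H x (m + b%:Z) b)).
  apply: (@normed_cvg _ R^o); exact: (@H_abs_cvg m).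
have x2 : 2 * x / 2 = x by rewrite [2 * x]mulrC mulfK // pnatr_eq0.
rewrite /besselI x2.
case: m cv => [u|u] cv.
- have E : (fun b => H x (Posz u + b%:Z) b) =
      (fun n => x ^+ (2 * n + `|Posz u|) / ((n`! * (n + `|Posz u|)`!)%N)%:R).
    apply: funext => b; rewrite -PoszD /= mulnC.
    have e1 : (u + b + b = 2 * b + u)%N by lia.
    by rewrite e1 (addnC u b).
  by rewrite -E.
- pose T := fun n => x ^+ (2 * n + `|Negz u|) / ((n`! * (n + `|Negz u|)`!)%N)%:R.
  have Z : forall b, (b < u.+1)%N -> H x (Negz u + b%:Z) b = 0.
    move=> b bu; have -> : Negz u + b%:Z = Negz (u - b) by rewrite NegzE; lia.
    by [].
  have Sh : forall n, H x (Negz u + (n + u.+1)%N%:Z) (n + u.+1) = T n.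
    move=> n; have -> : Negz u + (n + u.+1)%N%:Z = Posz n by rewrite NegzE; lia.
    rewrite /T /= mulnC; congr (x ^+ _ / (_ * _)%:R); lia.
  have ES : (fun n => series (fun b => H x (Negz u + b%:Z) b) (n + u.+1)) = series T.
    apply: funext => n; rewrite /series /=.
    rewrite (@big_cat_nat _ _ _ u.+1 0 (n + u.+1)) //=; last by rewrite leq_addl.
    rewrite big_nat_cond big1 ?add0r; last by move=> i /andP [/andP [_ iu] _]; exact: Z.
    rewrite -{1}[u.+1]add0n big_addn addnK; apply: eq_bigr => i _; exact: Sh.
  have cT : series T @ \oo --> limn (series (fun b => H x (Negz u + b%:Z) b)).
    rewrite -ES.
    by rewrite (cvg_shiftn u.+1).
  by rewrite (cvg_lim _ cT).
Qed.

End Bessel.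

Unset Implicit Arguments.

Theorem proposition4 (Rt : realType) (d : nat) (mu lam : 'I_d -> int)
  (W : nat -> seq letter) (x : Rt) :
  (0 < d)%N -> inW mu -> inW lam -> rank mu <= rank lam ->
  (forall n, count isL (W n) = n /\
             count isR (W n) = (n + `|rank lam - rank mu|)%N) ->
  series (fun n : nat =>
     (Z (W n) mu lam)%:R * x ^+ (2 * n + `|rank lam - rank mu|)%N
       / ((n`! * (n + `|rank lam - rank mu|)`!)%N)%:R)
    @ \oo --> \det (\matrix_(i < d, j < d) besselI (lam i - mu j) (2 * x)).
Proof.
move=> d0 muW lamW rk Wc.
set k := `|rank lam - rank mu|%N.
have kz : (k%:Z = \sum_i lam i - \sum_i mu i)%R.
  rewrite /k gez0_abs ?subr_ge0 // /rank; ring.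
pose g (p : 'S_d) (i : 'I_d) (b : nat) := H x (lam i - mu (p i) + b%:Z) b.
have T : forall n, (Z (W n) mu lam)%:R * x ^+ (2 * n + k)%N
       / ((n`! * (n + k)`!)%N)%:R = \sum_(p : 'S_d) (-1) ^+ p * cc (g p) n.
  move=> n; have [cL cR] := Wc n.
  rewrite /Z (nwalks_Ds Rt _ muW lamW) /Ds mulr_suml mulr_suml; apply: eq_bigr => p _.
  rewrite -!mulrA; congr (_ * _); rewrite !mulrA.
  have F := @fw_formula Rt x d n.+1 (rev (W n)) (permv p mu) lam.
  rewrite !count_rev cL cR -/k in F.
  have e1 : (2 * n + k = n + k + n)%N by lia.
  rewrite e1 mulnC F //.
  have sp : \sum_i mu (p i) = \sum_i mu i by rewrite [RHS](reindex_inj (@perm_inj _ p)).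
  rewrite /permv sumrB sp -kz; lia.
have -> : series (fun n => (Z (W n) mu lam)%:R * x ^+ (2 * n + k)%N
       / ((n`! * (n + k)`!)%N)%:R) =
    (fun N => \sum_(p : 'S_d) (-1) ^+ p * series (cc (g p)) N).
  apply: funext => N; rewrite /series /=.
  rewrite (eq_bigr _ (fun n _ => T n)) exchange_big /=; apply: eq_bigr => p _.
  by rewrite mulr_sumr.
have Lp : forall p : 'S_d, (fun N => (-1) ^+ p * series (cc (g p)) N) @ \oo -->
    (-1) ^+ p * \prod_i besselI (lam i - mu (p i)) (2 * x).
  move=> p; apply: cvgMr.
  have E : \prod_i besselI (lam i - mu (p i)) (2 * x) = \prod_i limn (series (g p i)).
    apply: eq_bigr => i _; apply/esym/cvg_lim => //; exact: H_cvg.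
  rewrite E; apply: cauchy_prod => i.
  exact: (@H_abs_cvg Rt x (lam i - mu (p i))).
have -> : \det (\matrix_(i < d, j < d) besselI (lam i - mu j) (2 * x)) =
    \sum_(p : 'S_d) (-1) ^+ p * \prod_i besselI (lam i - mu (p i)) (2 * x).
  rewrite /determinant; apply: eq_bigr => p _; congr (_ * _).
  by apply: eq_bigr => i _; rewrite mxE.
apply: (@cvg_big Rt 'S_d +%R 0 (fun _ => true) (@add_continuous Rt) nat \oo
     (index_enum _) (fun p N => (-1) ^+ p * series (cc (g p)) N)).
by move=> p _; exact: Lp.
Qed.
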